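(* For a matroid $M$ of rank $r$ on $E=\{0,\dots,n\}$, \[ \int_{X_E} c(\mathcal Q_M) = \begin{cases}1 & \text{if $M$ is a loop, or $M=U_{1,E}$},\\ 0&\text{otherwise,}\end{cases}\qquad \int_{X_E} c(\mathcal S_M^{\vee}) = \begin{cases}1 & \text{if $M$ is a coloop, or $M=U_{n,E}$},\\ 0&\text{otherwise.}\end{cases} \]
   Context: $X_E$ is the $n$-dimensional permutohedral variety with $T=(\mathbb C^* )^E$-fixed points $p_\sigma$ indexed by permutations $\sigma$ of $E$, and $K_T^0(X_E)$ embeds into $\prod_\sigma\mathbb Z[T_0^{\pm1},\dots,T_n^{\pm1}]$ via restriction. $B_\sigma(M)$ is the lexicographically first basis of $M$ for the order $\sigma(0)\prec\cdots\prec\sigma(n)$; $[\mathcal S_M],[\mathcal Q_M]\in K_T^0(X_E)$ are the classes restricting at $p_\sigma$ to $\sum_{i\in B_\sigma(M)}T_i^{-1}$ and $\sum_{i\notin B_\sigma(M)}T_i^{-1}$; $c(\cdot)$ is the total non-equivariant Chern class, $\vee$ the dual. A loop (resp. coloop) as a matroid means a matroid of rank $0$ (resp. $1$) on a one-element ground set; $U_{r,E}$ is the uniform matroid of rank $r$ on $E$. *)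

(* Defs.v *)
From HB Require Import structures.
From mathcomp Require Import all_boot all_order all_algebra all_fingroup.
From mathcomp Require Import mpoly.
Set Implicit Arguments. Unset Strict Implicit. Unset Printing Implicit Defensive.
Import Order.TTheory GRing.Theory Num.Theory.
Local Open Scope ring_scope.

Definition is_bases n (B : {set {set 'I_n.+1}}) : bool :=
  (B != set0) &&
  [forall b1 in B, forall b2 in B, forall x in b1 :\: b2,
      exists y in b2 :\: b1, (y |: (b1 :\ x)) \in B].

Record matroid (n : nat) := Matroid {
  bases : {set {set 'I_n.+1}};
  basesP : is_bases bases }.

Definition uniform_bases n (r : nat) : {set {set 'I_n.+1}} :=
  [set S : {set 'I_n.+1} | #|S| == r].

Definition is_loop n (M : matroid n) : bool :=
  (n == 0%N) && (bases M == [set set0]).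
Definition is_coloop n (M : matroid n) : bool :=
  (n == 0%N) && (bases M == [set setT]).

(* Lexicographic comparison for the order sigma(0) < ... < sigma(n):
   A is lex-before B iff at the first position k where they differ,
   sigma k lies in A but not in B.  *)
Definition lex_lt n (s : {perm 'I_n.+1}) (A B : {set 'I_n.+1}) : bool :=
  [exists k : 'I_n.+1,
     [&& s k \in A, s k \notin B &
         [forall j : 'I_n.+1, (j < k)%N ==> ((s j \in A) == (s j \in B))]]].

Definition lexfirst n (s : {perm 'I_n.+1}) (M : matroid n) : {set 'I_n.+1} :=
  odflt set0 [pick B in bases M | [forall B' in bases M, ~~ lex_lt s B' B]].

(* H_T^*(pt) = Z[t_0,...,t_n]; the character T_i has first Chern class t_i = 'X_i. *)
Definition HT n := {mpoly int[n.+1]}.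

(* restriction at p_sigma of the equivariant total Chern class of [Q_M]
   = sum_{i notin B_sigma} T_i^{-1}: Chern roots -t_i *)
Definition cQ n (M : matroid n) (s : {perm 'I_n.+1}) : HT n :=
  \prod_(i : 'I_n.+1 | i \notin lexfirst s M) (1 - 'X_i).

(* restriction at p_sigma of the equivariant total Chern class of [S_M]^vee
   = sum_{i in B_sigma} T_i: Chern roots t_i *)
Definition cSdual n (M : matroid n) (s : {perm 'I_n.+1}) : HT n :=
  \prod_(i : 'I_n.+1 | i \in lexfirst s M) (1 + 'X_i).

(* equivariant Euler class of T_{p_sigma} X_E: the tangent characters are
   T_{sigma(i)} / T_{sigma(i+1)}, 0 <= i < n *)
Definition euler_tangent n (s : {perm 'I_n.+1}) : HT n :=
  \prod_(i < n) ('X_(s (widen_ord (leqnSn n) i)) - 'X_(s (lift ord0 i))).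

Definition homog_part n (d : nat) (p : HT n) : HT n :=
  @pihomog n.+1 int mdeg d p.

(* integral over X_E (dim n) of the non-equivariant class whose equivariant
   lift restricts to c at p_sigma: Atiyah--Bott localization applied to the
   degree-n part, computed in the fraction field of Z[t_0..t_n]. *)
Definition integral_XE n (c : {perm 'I_n.+1} -> HT n) : {fraction HT n} :=
  \sum_(s : {perm 'I_n.+1}) @FracField.tofrac (HT n) (homog_part n (c s))
    / @FracField.tofrac (HT n) (euler_tangent s).

(* Main.v *)
Require Import Defs.
From HB Require Import structures.
From mathcomp Require Import all_boot all_order all_algebra all_fingroup.
From mathcomp Require Import mpoly.
From mathcomp Require Import ring zify.
Set Implicit Arguments. Unset Strict Implicit. Unset Printing Implicit Defensive.
Import Order.TTheory GRing.Theory Num.Theory.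
Local Open Scope ring_scope.

Section Paths.
Variables (K : fieldType) (T : eqType) (a : T -> K).
Hypothesis a_inj : injective a.

Fixpoint W (p : seq T) : K :=
  if p is x :: q then (if q is y :: _ then (a x - a y)^-1 * W q else 1) else 1.

Lemma subr_neq0 (x y : T) : x != y -> a x - a y != 0.
Proof. by move=> nxy; rewrite subr_eq0; apply: contra nxy => /eqP/a_inj ->. Qed.

Lemma PFc (S : seq T) : forall (b : T) (v : K), uniq (b :: S) ->
  (forall w, w \in b :: S -> v != a w) ->
  (v - a b)^-1 * \prod_(w <- S) (v - a w)^-1 =
  (v - a b)^-1 * \prod_(w <- S) (a b - a w)^-1 +
  \sum_(y <- S) (v - a y)^-1 * ((a y - a b)^-1 * \prod_(w <- S | w != y) (a y - a w)^-1).
Proof.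
elim: S => [|z S IH] b v.
  by move=> _ _; rewrite !big_nil addr0.
move=> U hv.
have [bz bS [zS US]] : [/\ b != z, b \notin S & z \notin S /\ uniq S].
  by move: U => /= /andP[]; rewrite inE negb_or => /andP[-> ->] /andP[-> ->].
have hvb : v - a b != 0 by rewrite subr_eq0; apply: hv; rewrite mem_head.
have hvz : v - a z != 0 by rewrite subr_eq0; apply: hv; rewrite !inE eqxx orbT.
have hbz : a b - a z != 0 by apply: subr_neq0.
have Uz : uniq (z :: S) by rewrite /= zS.
have IHv := IH z v Uz (fun w hw => hv w ltac:(by rewrite inE hw orbT)).
have IHb := IH z (a b) Uz.
have IHb' : (a b - a z)^-1 * \prod_(w <- S) (a b - a w)^-1 =
  (a b - a z)^-1 * \prod_(w <- S) (a z - a w)^-1 +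
  \sum_(y <- S) (a b - a y)^-1 * ((a y - a z)^-1 * \prod_(w <- S | w != y) (a y - a w)^-1).
  apply: IHb => w; rewrite inE => /orP[/eqP->|wS]; first by rewrite (inj_eq a_inj).
  by rewrite (inj_eq a_inj); apply: contraNneq bS => ->.
rewrite !big_cons eqxx /= IHv IHb'.
have -> : \prod_(w <- S | w != z) (a z - a w)^-1 = \prod_(w <- S) (a z - a w)^-1.
  rewrite big_seq_cond [RHS]big_seq; apply: eq_bigl => w.
  by apply/andb_idr => wS; apply: contraNneq zS => <-.
set P := \prod_(w <- S) (a z - a w)^-1.
have hy : forall y, y \in S -> [/\ v - a y != 0, a b - a y != 0, a y - a z != 0 & a y - a b != 0].
  move=> y yS; split.
  - by rewrite subr_eq0; apply: hv; rewrite !inE yS !orbT.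
  - by apply: subr_neq0; apply: contraNneq bS => ->.
  - by apply: subr_neq0; apply: contraNneq zS => <-.
  - by apply: subr_neq0; apply: contraNneq bS => <-.
have eP : (v - a b)^-1 * (v - a z)^-1 = (v - a b)^-1 * (a b - a z)^-1 + (v - a z)^-1 * (a z - a b)^-1.
  have hzb : a z - a b != 0 by apply: subr_neq0; rewrite eq_sym.
  by field; rewrite hvb hvz hbz hzb.
rewrite !mulrDr !mulrA eP !big_distrr /=.
have eS : \sum_(i <- S) (v - a b)^-1 * ((v - a i)^-1 * ((a i - a z)^-1 * \prod_(w <- S | w != i) (a i - a w)^-1)) =
  \sum_(i <- S) (v - a b)^-1 * ((a b - a i)^-1 * ((a i - a z)^-1 * \prod_(w <- S | w != i) (a i - a w)^-1)) +
  \sum_(j <- S) (v - a j)^-1 * ((a j - a b)^-1 * \prod_(w <- z :: S | w != j) (a j - a w)^-1).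
  rewrite -big_split /= big_seq [RHS]big_seq; apply: eq_bigr => y yS.
  rewrite big_cons (_ : z != y); last by apply: contraNneq zS => ->.
  have [h1 h2 h3 h4] := hy y yS.
  by field; rewrite h1 h2 h3 h4 hvb.
rewrite eS; ring.
Qed.

Lemma big_notin (R : Type) (idx : R) (op : Monoid.com_law idx) (S : seq T) z (F : T -> R) :
  z \notin S -> \big[op/idx]_(w <- S | w != z) F w = \big[op/idx]_(w <- S) F w.
Proof.
move=> zS; rewrite big_seq_cond [RHS]big_seq; apply: eq_bigl => w.
by apply/andb_idr => wS; apply: contraNneq zS => <-.
Qed.

Lemma Lag (S : seq T) (b : T) : uniq (b :: S) ->
  \prod_(w <- S) (a b - a w)^-1 +
  \sum_(y <- S) (a y - a b)^-1 * \prod_(w <- S | w != y) (a y - a w)^-1 = (S == [::])%:R.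
Proof.
case: S => [|z S] U; first by rewrite !big_nil addr0.
have [bz bS [zS US]] : [/\ b != z, b \notin S & z \notin S /\ uniq S].
  by move: U => /= /andP[]; rewrite inE negb_or => /andP[-> ->] /andP[-> ->].
have Uz : uniq (z :: S) by rewrite /= zS.
have := PFc (v := a b) Uz.
rewrite !big_cons eqxx /= => ->; last first.
  move=> w; rewrite inE => /orP[/eqP->|wS]; first by rewrite (inj_eq a_inj).
  by rewrite (inj_eq a_inj); apply: contraNneq bS => ->.
rewrite big_notin //.
have hbz : a b - a z != 0 by apply: subr_neq0.
have hzb : a z - a b != 0 by apply: subr_neq0; rewrite eq_sym.
have eS : \sum_(y <- S) (a y - a b)^-1 * \prod_(w <- z :: S | w != y) (a y - a w)^-1 =
  - \sum_(y <- S) (a b - a y)^-1 * ((a y - a z)^-1 * \prod_(w <- S | w != y) (a y - a w)^-1).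
  rewrite -sumrN big_seq [RHS]big_seq; apply: eq_bigr => y yS.
  rewrite big_cons (_ : z != y); last by apply: contraNneq zS => ->.
  have h1 : a b - a y != 0 by apply: subr_neq0; apply: contraNneq bS => ->.
  have h2 : a y - a b != 0 by apply: subr_neq0; apply: contraNneq bS => <-.
  have h3 : a y - a z != 0 by apply: subr_neq0; apply: contraNneq zS => <-.
  by field; rewrite h1 h2 h3.
rewrite eS /=.
have eP : (a b - a z)^-1 = - (a z - a b)^-1 by rewrite -invrN opprB.
rewrite eP; ring.
Qed.

Lemma PFstd (S : seq T) (z : T) (v : K) : uniq (z :: S) ->
  (forall w, w \in z :: S -> v != a w) ->
  \prod_(w <- z :: S) (v - a w)^-1 =
  \sum_(x <- z :: S) (v - a x)^-1 * \prod_(w <- z :: S | w != x) (a x - a w)^-1.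
Proof.
move=> U hv; have zS : z \notin S by case/andP: U.
rewrite !big_cons (PFc U hv) eqxx /= big_notin //; congr (_ + _).
rewrite big_seq [RHS]big_seq; apply: eq_bigr => y yS.
by rewrite big_cons (_ : z != y) //; apply: contraNneq zS => ->.
Qed.

Lemma big_perms (R : Type) (idx : R) (op : Monoid.com_law idx) (s : seq T) (F : seq T -> R) :
  uniq s -> s != [::] ->
  \big[op/idx]_(t <- permutations s) F t =
  \big[op/idx]_(x <- s) \big[op/idx]_(t <- permutations (rem x s)) F (x :: t).
Proof.
move=> U ns; rewrite (perm_big _ (permutationsE _)); last by case: s ns {U}.
by rewrite big_allpairs_dep undup_id.
Qed.

Lemma big_rem (R : Type) (idx : R) (op : Monoid.com_law idx) (S : seq T) x (P : pred T) (F : T -> R) :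
  uniq S -> \big[op/idx]_(w <- rem x S | P w) F w = \big[op/idx]_(w <- S | P w && (w != x)) F w.
Proof.
move=> U; rewrite rem_filter // big_filter_cond; apply: eq_bigl => w /=; exact: andbC.
Qed.

Lemma Hpath m : forall (S : seq T) (v : T), (size S <= m)%N -> uniq (v :: S) ->
  \sum_(t <- permutations S) W (v :: t) = \prod_(w <- S) (a v - a w)^-1.
Proof.
elim: m => [|m IH] S v.
  by case: S => // _ _; rewrite big_seq1 big_nil.
case: S => [|z S'] hS U; first by rewrite big_seq1 big_nil.
set S := z :: S' in hS U *.
have US : uniq S by case/andP: U.
rewrite big_perms //.
transitivity (\sum_(x <- S) (a v - a x)^-1 * \prod_(w <- S | w != x) (a x - a w)^-1).
  rewrite big_seq [RHS]big_seq; apply: eq_bigr => x xS.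
  rewrite (_ : \sum_(t <- permutations (rem x S)) W [:: v, x & t] =
     (a v - a x)^-1 * \sum_(t <- permutations (rem x S)) W (x :: t)); last by rewrite big_distrr.
  rewrite IH.
  - by rewrite rem_filter // big_filter.
  - by rewrite size_rem // -ltnS (leq_trans _ hS) // prednK // (ltn0Sn). 
  - by rewrite cons_uniq mem_rem_uniqF // rem_uniq.
rewrite PFstd //.
move=> w wS; rewrite (inj_eq a_inj); case/andP: U => vS _.
by apply: contraNneq vS => ->.
Qed.


Lemma W_cons2 x y t : W [:: x, y & t] = (a x - a y)^-1 * W (y :: t).
Proof. by []. Qed.

Variables (L : pred T) (d : T) (g : T -> K).

Definition firstL (p : seq T) := nth d p (find L p).

Lemma firstL_cons x t : firstL (x :: t) = if L x then x else firstL t.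
Proof. by rewrite /firstL /=; case: (L x). Qed.

Lemma uniq_bL (S : seq T) b : uniq S -> L b -> uniq (b :: filter (predC L) S).
Proof. by move=> U Lb; rewrite /= mem_filter /= Lb filter_uniq. Qed.

Lemma bracket (S : seq T) b v : uniq S -> L b ->
  (forall w, w \in b :: S -> v != a w) ->
  (v - a b)^-1 * \prod_(w <- S | ~~ L w) (v - a w)^-1 =
  (v - a b)^-1 * \prod_(w <- S | ~~ L w) (a b - a w)^-1 +
  \sum_(y <- S | ~~ L y) (v - a y)^-1 * ((a y - a b)^-1 * \prod_(w <- S | ~~ L w && (w != y)) (a y - a w)^-1).
Proof.
move=> U Lb hv.
under [X in _ = _ + X]eq_bigr => y _ do rewrite -(big_filter_cond _ (fun w => ~~ L w)).
rewrite -[in LHS]big_filter -[in X in _ = X + _]big_filter -[in X in _ = _ + X]big_filter.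
apply: (PFc (v := v) (uniq_bL U Lb)) => w; rewrite inE => /orP[/eqP->|]; first by apply: hv; rewrite mem_head.
by rewrite mem_filter => /andP[_ wS]; apply: hv; rewrite inE wS orbT.
Qed.

Lemma bracketLag (S : seq T) b : uniq S -> L b ->
  \prod_(w <- S | ~~ L w) (a b - a w)^-1 +
  \sum_(y <- S | ~~ L y) (a y - a b)^-1 * \prod_(w <- S | ~~ L w && (w != y)) (a y - a w)^-1
  = (~~ has (predC L) S)%:R.
Proof.
move=> U Lb.
under [X in _ + X = _]eq_bigr => y _ do rewrite -(big_filter_cond _ (fun w => ~~ L w)).
rewrite -[in X in X + _ = _]big_filter -[in X in _ + X = _]big_filter has_filter negbK.
exact: (Lag (uniq_bL U Lb)).
Qed.


Definition Dd (S : seq T) b := \prod_(w <- S | L w && (w != b)) (a b - a w)^-1.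

Lemma has_rem (S : seq T) y : uniq S -> ~~ L y -> has L S -> has L (rem y S).
Proof.
move=> U nLy /hasP[w wS Lw]; apply/hasP; exists w => //.
rewrite mem_rem_uniq // inE wS andbT; by apply: contraNneq nLy => <-.
Qed.

Lemma Gpath m : forall (S : seq T) (x : T), (size S <= m)%N -> uniq (x :: S) -> has L S ->
  \sum_(t <- permutations S) g (firstL t) * W (x :: t) =
  \prod_(w <- S | ~~ L w) (a x - a w)^-1 *
  \sum_(b <- S | L b) g b * ((a x - a b)^-1 * Dd S b).
Proof.
elim: m => [|m IH] S x; first by case: S.
case: S => [|z S'] hS U hL; first by [].
set S := z :: S' in hS U hL *.
have US : uniq S by case/andP: U.
have xS : x \notin S by case/andP: U.
have hx : forall y, y \in S -> a x - a y != 0.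
  by move=> y yS; apply: subr_neq0; apply: contraNneq xS => ->.
have hyw : forall y w, y \in S -> w \in S -> y != w -> a y - a w != 0.
  by move=> y w _ _; apply: subr_neq0.
rewrite big_perms //.
transitivity (\sum_(y <- S) (a x - a y)^-1 * (if L y then g y * \prod_(w <- S | w != y) (a y - a w)^-1
   else \prod_(w <- S | ~~ L w && (w != y)) (a y - a w)^-1 * \sum_(b <- S | L b) g b * ((a y - a b)^-1 * Dd S b))).
  rewrite big_seq [RHS]big_seq; apply: eq_bigr => y yS.
  under eq_bigr do rewrite W_cons2 mulrCA.
  rewrite -big_distrr; congr (_ * _).
  have Uy : uniq (y :: rem y S) by rewrite cons_uniq mem_rem_uniqF // rem_uniq.
  case Ly: (L y).
    under eq_bigr do rewrite firstL_cons Ly.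
    rewrite -big_distrr (Hpath (leqnn _) Uy).
    by rewrite rem_filter // big_filter.
  under eq_bigr do rewrite firstL_cons Ly.
  rewrite IH; [| by rewrite size_rem // -ltnS (leq_trans _ hS) // prednK | exact: Uy
     | by apply: has_rem => //; rewrite Ly].
  rewrite !big_rem //; congr (_ * _).
  rewrite big_seq_cond [RHS]big_seq_cond; apply: eq_big => b.
    by apply: andb_id2l => bS; case Lb: (L b) => //=; apply: contraTneq Lb => ->; rewrite Ly.
  move=> /andP[bS /andP[Lb _]]; congr (_ * (_ * _)).
  rewrite /Dd big_rem //; apply: eq_bigl => w.
  case Lw: (L w) => //=; apply/andb_idr => _; apply: contraTneq Lw => ->; by rewrite Ly.
rewrite (bigID L) /=.
rewrite [X in X + _](eq_bigr (fun y => (a x - a y)^-1 * (g y *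
    (\prod_(w <- S | ~~ L w) (a y - a w)^-1 * Dd S y)))); last first.
  move=> y Ly; rewrite Ly; congr (_ * (_ * _)).
  rewrite (bigID L) /= mulrC /Dd; congr (_ * _); apply: eq_bigl => w.
    by case Lw: (L w); rewrite ?andbF ?andbT //; apply: contraFneq Lw => ->.
  by rewrite andbC.
rewrite [X in _ + X](eq_bigr (fun y => \sum_(b <- S | L b) g b * Dd S b *
    ((a x - a y)^-1 * ((a y - a b)^-1 * \prod_(w <- S | ~~ L w && (w != y)) (a y - a w)^-1)))); last first.
  move=> y nLy; rewrite (negbTE nLy) !big_distrr /=; apply: eq_bigr => b _; ring.
rewrite exchange_big /= -big_split /= big_distrr /=.
rewrite big_seq_cond [RHS]big_seq_cond; apply: eq_bigr => b /andP[bS Lb].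
rewrite -big_distrr /=.
have hv' : forall w, w \in b :: S -> a x != a w.
  move=> w; rewrite inE => /predU1P[->|wS]; rewrite (inj_eq a_inj);
  by apply: contraNneq xS => ->.
have E := bracket US Lb hv'.
set Lx := \prod_(w <- S | ~~ L w) (a x - a w)^-1.
set Lb' := \prod_(w <- S | ~~ L w) (a b - a w)^-1.
set Sg := \sum_(y <- S | ~~ L y) _.
move: E; rewrite -/Lx -/Lb' -/Sg => E.
have -> : Sg = (a x - a b)^-1 * Lx - (a x - a b)^-1 * Lb' by rewrite E; ring.
ring.
Qed.


Lemma Fpath (S : seq T) : uniq S -> has L S ->
  \sum_(p <- permutations S) g (firstL p) * W p =
  (~~ has (predC L) S)%:R * \sum_(b <- S | L b) g b * Dd S b.
Proof.
case: S => [|z S'] // US hL.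
set S := z :: S' in US hL *.
rewrite big_perms //.
transitivity (\sum_(y <- S) (if L y then g y * \prod_(w <- S | w != y) (a y - a w)^-1
   else \prod_(w <- S | ~~ L w && (w != y)) (a y - a w)^-1 * \sum_(b <- S | L b) g b * ((a y - a b)^-1 * Dd S b))).
  rewrite big_seq [RHS]big_seq; apply: eq_bigr => y yS.
  have Uy : uniq (y :: rem y S) by rewrite cons_uniq mem_rem_uniqF // rem_uniq.
  case Ly: (L y).
    under eq_bigr do rewrite firstL_cons Ly.
    rewrite -big_distrr (Hpath (leqnn _) Uy).
    by rewrite rem_filter // big_filter.
  under eq_bigr do rewrite firstL_cons Ly.
  rewrite (Gpath (leqnn _) Uy); last by apply: has_rem => //; rewrite Ly.
  rewrite !big_rem //; congr (_ * _).
  rewrite big_seq_cond [RHS]big_seq_cond; apply: eq_big => b.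
    by apply: andb_id2l => bS; case Lb: (L b) => //=; apply: contraTneq Lb => ->; rewrite Ly.
  move=> /andP[bS /andP[Lb _]]; congr (_ * (_ * _)).
  rewrite /Dd big_rem //; apply: eq_bigl => w.
  case Lw: (L w) => //=; apply/andb_idr => _; apply: contraTneq Lw => ->; by rewrite Ly.
rewrite (bigID L) /=.
rewrite [X in X + _](eq_bigr (fun y => g y *
    (\prod_(w <- S | ~~ L w) (a y - a w)^-1 * Dd S y))); last first.
  move=> y Ly; rewrite Ly; congr (_ * _).
  rewrite (bigID L) /= mulrC /Dd; congr (_ * _); apply: eq_bigl => w.
    by case Lw: (L w); rewrite ?andbF ?andbT //; apply: contraFneq Lw => ->.
  by rewrite andbC.
rewrite [X in _ + X](eq_bigr (fun y => \sum_(b <- S | L b) g b * Dd S b *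
    ((a y - a b)^-1 * \prod_(w <- S | ~~ L w && (w != y)) (a y - a w)^-1))); last first.
  move=> y nLy; rewrite (negbTE nLy) !big_distrr /=; apply: eq_bigr => b _; ring.
rewrite exchange_big /= -big_split /= mulr_sumr.
rewrite big_seq_cond [RHS]big_seq_cond; apply: eq_bigr => b /andP[bS Lb].
rewrite -big_distrr /= -(bracketLag US Lb); ring.
Qed.

End Paths.

Section Paths2.
Variables (K : fieldType) (T : eqType) (a : T -> K).

Lemma W_nth (p : seq T) x0 : W a p =
  \prod_(i < (size p).-1) (a (nth x0 p i) - a (nth x0 p i.+1))^-1.
Proof.
elim: p => [|x q IH]; first by rewrite big_ord0.
case: q IH => [|y q] IH; first by rewrite big_ord0.
by rewrite W_cons2 IH /= big_ord_recl.
Qed.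

Lemma W_rev (p : seq T) : W a (rev p) = (-1) ^+ (size p).-1 * W a p.
Proof.
case: p => [|x0 q]; first by rewrite /= expr0 mul1r.
set p := x0 :: q.
rewrite !(W_nth _ x0) size_rev /=.
rewrite -(big_mkord xpredT (fun i => (a (nth x0 (rev p) i) - a (nth x0 (rev p) i.+1))^-1)).
rewrite big_rev_mkord subn0.
rewrite -(big_mkord xpredT (fun i => (a (nth x0 p i) - a (nth x0 p i.+1))^-1)).
rewrite big_mkord.
have -> : (-1) ^+ size q = (-1) ^+ #|'I_(size q)| :> K by rewrite card_ord.
rewrite -prodrN.
apply: eq_bigr => i _.
have ip : (i < size q)%N := ltn_ord i.
rewrite !nth_rev /p /= ?ltnS; try lia.
have -> : ((size q).+1 - (size q - i.+1).+1 = i.+1)%N by lia.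
have -> : ((size q).+1 - (size q - i.+1).+2 = i)%N by lia.
by rewrite /= -invrN opprB.
Qed.

Lemma sum_perm_rev (R : Type) (idx : R) (op : Monoid.com_law idx) (e : seq T) (F : seq T -> R) :
  \big[op/idx]_(p <- permutations e) F (rev p) = \big[op/idx]_(p <- permutations e) F p.
Proof.
rewrite -(big_map rev xpredT F); apply: perm_big; apply: uniq_perm.
- by rewrite map_inj_uniq ?permutations_uniq //; exact: (inv_inj (@revK _)).
- exact: permutations_uniq.
move=> x; apply/mapP/idP => [[y Y ->]|X].
  by rewrite mem_permutations perm_rev -mem_permutations.
by exists (rev x); rewrite ?revK // mem_permutations perm_rev -mem_permutations.
Qed.
End Paths2.

Lemma sum_perm_seq (R : Type) (idx : R) (op : Monoid.com_law idx) m (F : seq 'I_m -> R) :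
  \big[op/idx]_(s : {perm 'I_m}) F [seq s i | i <- enum 'I_m] =
  \big[op/idx]_(p <- permutations (enum 'I_m)) F p.
Proof.
rewrite -(big_map (fun s : {perm 'I_m} => [seq s i | i <- enum 'I_m]) xpredT F).
have inj : injective (fun s : {perm 'I_m} => [seq s i | i <- enum 'I_m]).
  move=> s1 s2 E; apply/permP => i.
  have /(congr1 (fun p => nth i p i)) := E.
  by rewrite !(nth_map i) -?enumT ?size_enum_ord ?ltn_ord // nth_ord_enum.
have U1 : uniq [seq [seq s i | i <- enum (ordinal m)] | s : {perm (ordinal m)} <- index_enum {perm (ordinal m)}].
  by rewrite map_inj_uniq // index_enum_uniq.
apply: perm_big; apply: uniq_perm => //; first exact: permutations_uniq.
apply: (uniq_min_size U1 _ _).2.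
  move=> x /mapP[s _ ->]; rewrite mem_permutations; apply: uniq_perm.
  - by rewrite map_inj_uniq ?enum_uniq //; exact: perm_inj.
  - exact: enum_uniq.
  move=> i; rewrite mem_enum; apply/mapP; exists ((s^-1)%g i); first by rewrite mem_enum.
  by rewrite permKV.
rewrite size_permutations ?enum_uniq // size_enum_ord size_map.
by rewrite [index_enum _]unlock -enumT -cardT card_Sn.
Qed.


Section Matroid.
Variables (n : nat) (M : matroid n).

Lemma bases_neq0 : bases M != set0.
Proof. by case: M => B /= /andP[]. Qed.

Lemma exch b1 b2 x : b1 \in bases M -> b2 \in bases M -> x \in b1 :\: b2 ->
  exists2 y, y \in b2 :\: b1 & y |: (b1 :\ x) \in bases M.
Proof.
case: M => B /= /andP[_ /forallP H] b1B b2B xb.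
have /forallP H1 := implyP (H b1) b1B.
have /forallP H2 := implyP (H1 b2) b2B.
have /existsP[y /andP[yb yB]] := implyP (H2 x) xb.
by exists y.
Qed.

Lemma bases_card_ind k : forall b1 b2, (#|b1 :\: b2| <= k)%N ->
  b1 \in bases M -> b2 \in bases M -> #|b1| = #|b2|.
Proof.
elim: k => [|k IH] b1 b2 hk b1B b2B.
  have e0 : b1 :\: b2 = set0 by apply/eqP; rewrite -cards_eq0 -leqn0.
  have e12 : b1 \subset b2 by rewrite -setD_eq0 e0.
  case: (set_0Vmem (b2 :\: b1)) => [e21|[x xb]].
    by apply/eqP; rewrite eqn_leq !subset_leq_card // -setD_eq0 e21.
  have [y yb _] := exch b2B b1B xb.
  by move: yb; rewrite e0 inE.
case: (set_0Vmem (b1 :\: b2)) => [e12|[x xb]].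
  by apply: (IH b1 b2) => //; rewrite e12 cards0.
have [y yb b'B] := exch b1B b2B xb.
move: xb yb; rewrite !inE => /andP[xb2 xb1] /andP[yb1 yb2].
rewrite -(IH _ _ _ b'B b2B).
  rewrite cardsU1 !inE (negbTE yb1) andbF /= add1n (cardsD1 x b1) xb1 /=.
  by rewrite add1n.
have -> : (y |: (b1 :\ x)) :\: b2 = (b1 :\: b2) :\ x.
  apply/setP => w; rewrite !inE.
  case: (w =P y) => [->|_] /=; first by rewrite yb2 /= andbF.
  by case: (w != x); case: (w \in b1); case: (w \in b2).
move: hk; rewrite (cardsD1 x (b1 :\: b2)) !inE xb2 xb1 /=; lia.
Qed.

Lemma bases_card b1 b2 : b1 \in bases M -> b2 \in bases M -> #|b1| = #|b2|.
Proof. exact: (@bases_card_ind _ b1 b2 (leqnn _)). Qed.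

Lemma lex_irr (s : {perm 'I_n.+1}) A : ~~ lex_lt s A A.
Proof. by apply/existsP => -[k /and3P[-> /negP]]. Qed.

Lemma lex_trans (s : {perm 'I_n.+1}) A B C : lex_lt s A B -> lex_lt s B C -> lex_lt s A C.
Proof.
move=> /existsP[k1 /and3P[a1 b1 /forallP h1]] /existsP[k2 /and3P[b2 c2 /forallP h2]].
apply/existsP; case: (ltngtP k1 k2) => [lt12|lt21|e12].
- exists k1; apply/and3P; split => //.
    by have /eqP <- := implyP (h2 k1) lt12.
  apply/forallP => j; apply/implyP => jk.
  have /eqP -> := implyP (h1 j) jk.
  exact: (implyP (h2 j) (ltn_trans jk lt12)).
- exists k2; apply/and3P; split => //.
    by have /eqP -> := implyP (h1 k2) lt21.
  apply/forallP => j; apply/implyP => jk.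
  have /eqP -> := implyP (h1 j) (ltn_trans jk lt21).
  exact: (implyP (h2 j) jk).
- have e : k1 = k2 by apply: val_inj.
  by rewrite e b2 in b1.
Qed.

Lemma lexfirstP s : lexfirst s M \in bases M /\
  forall B', B' \in bases M -> ~~ lex_lt s B' (lexfirst s M).
Proof.
rewrite /lexfirst; case: pickP => [B /andP[BM /forallP H]|none].
  by split => // B' B'M; exact: (implyP (H B') B'M).
exfalso.
have /set0Pn[B0 B0M] := bases_neq0.
case: (@arg_minnP _ B0 (fun B => B \in bases M)
  (fun B => #|[set B' in bases M | lex_lt s B' B]|) B0M) => B BM Bmin.
have := none B; rewrite BM /= => /negbT /forallPn[B'].
rewrite negb_imply negbK => /andP[B'M lt].
have : (#|[set B'' in bases M | lex_lt s B'' B']| < #|[set B'' in bases M | lex_lt s B'' B]|)%N.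
  apply: proper_card; apply/properP; split.
    by apply/subsetP => C; rewrite !inE => /andP[-> h]; exact: lex_trans h lt.
  by exists B'; rewrite !inE ?B'M ?lt ?lex_irr.
by rewrite ltnNge Bmin.
Qed.


Definition pseq (s : {perm 'I_n.+1}) := [seq s i | i <- enum 'I_n.+1].

Lemma nth_pseq s (j : 'I_n.+1) : nth ord0 (pseq s) j = s j.
Proof. by rewrite /pseq (nth_map ord0) -?enumT ?size_enum_ord ?ltn_ord // nth_ord_enum. Qed.

Lemma size_pseq s : size (pseq s) = n.+1.
Proof. by rewrite size_map size_enum_ord. Qed.

Lemma mem_pseq s x : x \in pseq s.
Proof. by apply/mapP; exists ((s^-1)%g x); rewrite ?mem_enum ?permKV. Qed.

Lemma lexfirst_rank1 s : (forall B, B \in bases M -> #|B| = 1%N) ->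
  lexfirst s M = [set firstL [pred l | [set l] \in bases M] ord0 (pseq s)].
Proof.
move=> r1; set L := [pred l | [set l] \in bases M].
have [LM Hmin] := lexfirstP s.
have /cards1P[l El] : #|lexfirst s M| == 1%N by rewrite r1.
have /set0Pn[B0 B0M] := bases_neq0.
have /cards1P[l0 El0] : #|B0| == 1%N by rewrite r1.
have hasL : has L (pseq s).
  by apply/hasP; exists l0; rewrite ?mem_pseq // inE /= -El0.
have hk : (find L (pseq s) < n.+1)%N by move: hasL; rewrite has_find size_pseq.
set k := Ordinal hk.
have eb : firstL L ord0 (pseq s) = s k by rewrite /firstL -nth_pseq.
have Lb : L (s k) by rewrite -eb /firstL nth_find.
rewrite El eb; congr [set _]; apply/eqP/negPn/negP => nlb.
have := Hmin _ Lb; rewrite El => /negP; apply.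
apply/existsP; exists k; rewrite !inE eqxx /= eq_sym nlb /=.
apply/forallP => j; apply/implyP => jk; rewrite !inE.
have nLj : ~~ L (s j) by rewrite -nth_pseq (before_find _ jk).
have -> : (s j == s k) = false by apply/negbTE; apply: contraTneq jk => /perm_inj ->; rewrite ltnn.
suff -> : (s j == l) = false by [].
by apply/negbTE; apply: contraNneq nLj => ->; rewrite /L /= -El.
Qed.


Lemma lexfirst_rankn s : (forall B, B \in bases M -> #|B| = n) ->
  lexfirst s M = [set~ firstL [pred c | [set~ c] \in bases M] ord0 (rev (pseq s))].
Proof.
move=> rn; set C := [pred c | [set~ c] \in bases M].
have compl : forall B, B \in bases M -> exists l, B = [set~ l].
  move=> B BM; have /cards1P[l El] : #|~: B| == 1%N.
    by apply/eqP; have := cardsC B; rewrite card_ord rn //; lia.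
  by exists l; rewrite -El setCK.
have [LM Hmin] := lexfirstP s.
have [l El] := compl _ LM.
have /set0Pn[B0 B0M] := bases_neq0.
have [l0 El0] := compl _ B0M.
have hasC : has C (rev (pseq s)).
  by apply/hasP; exists l0; rewrite ?mem_rev ?mem_pseq // inE /= -El0.
have hk : (find C (rev (pseq s)) < n.+1)%N by move: hasC; rewrite has_find size_rev size_pseq.
have hK : (n - find C (rev (pseq s)) < n.+1)%N by rewrite ltnS leq_subr.
set K0 := Ordinal hK.
have eb : firstL C ord0 (rev (pseq s)) = s K0.
  by rewrite /firstL nth_rev size_pseq // -nth_pseq subSS.
have Cb : C (s K0) by rewrite -eb /firstL nth_find.
have after : forall j : 'I_n.+1, (K0 < j)%N -> ~~ C (s j).
  move=> j Kj; have jn : (j <= n)%N by rewrite -ltnS.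
  have ij : (n - j < find C (rev (pseq s)))%N.
    move: Kj; rewrite /= => Kj; lia.
  have := before_find ord0 ij; rewrite nth_rev ?size_pseq; last lia.
  have -> : (n.+1 - (n - j).+1)%N = j by lia.
  by rewrite nth_pseq => ->.
rewrite El eb; congr [set~ _]; apply/eqP/negPn/negP => nlb.
have Cl : C l by rewrite /C /= -El.
have := Hmin _ Cb; rewrite El => /negP; apply.
set kl := ((s^-1)%g l).
have skl : s kl = l by rewrite permKV.
have klK : (kl < K0)%N.
  rewrite ltn_neqAle; apply/andP; split.
    by apply: contra nlb => /eqP/val_inj; rewrite -skl => ->.
  rewrite leqNgt; apply/negP => /after; by rewrite skl Cl.
apply/existsP; exists kl; rewrite !inE skl eqxx /=.
rewrite nlb /=.
apply/forallP => j; apply/implyP => jk; rewrite !inE.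
have -> : (s j == l) = false.
  by apply/negbTE; rewrite -skl; apply: contraTneq jk => /perm_inj ->; rewrite ltnn.
suff -> : (s j == s K0) = false by [].
apply/negbTE; apply: contraTneq (ltn_trans jk klK) => /perm_inj ->; by rewrite ltnn.
Qed.

End Matroid.

Section Final.
Variable n : nat.
Local Notation K := {fraction HT n}.
Definition tt (i : 'I_n.+1) : K := @FracField.tofrac (HT n) 'X_i.

Lemma X_coef (i j : 'I_n.+1) : ('X_i : HT n)@_U_(j) = (i == j)%:R.
Proof. exact: mcoeffXU. Qed.

Lemma tt_inj : injective tt.
Proof.
move=> i j /eqP; rewrite /tt tofrac_eq => /eqP E.
have := congr1 (fun p : HT n => p@_U_(i)) E; rewrite /= !X_coef eqxx.
by case: (j =P i) => // _ /eqP; rewrite oner_eq0.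
Qed.

Lemma tt_neq0 i : tt i != 0.
Proof.
rewrite /tt tofrac_eq0; apply/negP => /eqP E.
have := congr1 (fun p : HT n => p@_U_(i)) E; rewrite /= X_coef eqxx mcoeff0.
by move/eqP; rewrite oner_eq0.
Qed.

Lemma Weuler s : (@FracField.tofrac (HT n) (euler_tangent s))^-1 = W tt (pseq s).
Proof.
rewrite (W_nth _ _ ord0) size_pseq /= /euler_tangent rmorph_prod -prodfV.
apply: eq_bigr => i _; rewrite rmorphB /=.
have -> : nth ord0 (pseq s) i = s (widen_ord (leqnSn n) i).
  by rewrite -nth_pseq.
have -> : nth ord0 (pseq s) i.+1 = s (lift ord0 i) by rewrite -nth_pseq.
by [].
Qed.


Lemma prodX_mono (J : {set 'I_n.+1}) :
  \prod_(i in J) ('X_i : HT n) = 'X_[\sum_(i in J) U_(i)].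
Proof.
rewrite (big_morph (fun m : 'X_{1..n.+1} => ('X_[m] : HT n)) (@mpolyXD _ _) (@mpolyX0 _ _)) //.
Qed.

Lemma mdeg_mono (J : {set 'I_n.+1}) : mdeg (\sum_(i in J) U_(i) : 'X_{1..n.+1}) = #|J|.
Proof. by rewrite mdeg_sum (eq_bigr (fun _ => 1%N)) ?sum1_card // => i _; rewrite mdeg1. Qed.

Lemma homog_prod (f : 'I_n.+1 -> int) d :
  homog_part d (\prod_i (1 + f i *: ('X_i : HT n))) =
  \sum_(J : {set 'I_n.+1} | #|J| == d) (\prod_(i in J) f i) *: \prod_(i in J) ('X_i : HT n).
Proof.
rewrite (eq_bigr (fun i => f i *: ('X_i : HT n) + 1)); last by move=> i _; rewrite addrC.
rewrite bigA_distr.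
rewrite /homog_part raddf_sum /= [RHS]big_mkcond /=; apply: eq_bigr => J _.
rewrite -big_mkcond /= scaler_prod linearZ /= prodX_mono pihomogX.
have E := mdeg_mono J.
move: E; set m := (\sum_(i in J) U_(i))%MM => E.
case: ifP => h1; case: ifP => h2 //; rewrite ?scaler0 //.
  by have h1' : mdeg m == d := h1; move: h1'; rewrite E h2.
by have h1' : (mdeg m == d) = false := h1; move: h2; rewrite -E h1'.
Qed.


Lemma hp_small (f : 'I_n.+1 -> int) d : (#|[set i | f i != 0]| < d)%N ->
  homog_part d (\prod_i (1 + f i *: ('X_i : HT n))) = 0.
Proof.
move=> hs; rewrite homog_prod big1 // => J /eqP cJ.
have /subsetPn[i iJ] : ~~ (J \subset [set i | f i != 0]).
  by apply: contraL hs => /subset_leq_card; rewrite cJ -leqNgt.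
rewrite inE negbK => /eqP fi.
by rewrite (bigD1 i) //= fi mul0r scale0r.
Qed.

Lemma hp_one (f : 'I_n.+1 -> int) b c : (forall i, i != b -> f i = c) -> f b = 0 ->
  homog_part n (\prod_i (1 + f i *: ('X_i : HT n))) = c ^+ n *: \prod_(i in [set~ b]) ('X_i : HT n).
Proof.
move=> fc fb; rewrite homog_prod (bigD1 [set~ b]) /=; last by rewrite cardsC1 card_ord.
rewrite [X in _ + X]big1 ?addr0.
  congr (_ *: _); rewrite (eq_bigr (fun => c)) ?prodr_const ?cardsC1 ?card_ord //.
  by move=> i; rewrite !inE => /fc.
move=> J /andP[/eqP cJ nJ].
have bJ : b \in J.
  apply: contraNT nJ => nbJ; rewrite eqEcard cardsC1 card_ord cJ leqnn andbT.
  by apply/subsetP => i iJ; rewrite !inE; apply: contraNneq nbJ => <-.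
by rewrite (bigD1 b) //= fb mul0r scale0r.
Qed.

Lemma hp_zero (f : 'I_n.+1 -> int) :
  homog_part 0 (\prod_i (1 + f i *: ('X_i : HT n))) = 1.
Proof.
rewrite homog_prod (big_pred1 set0); last by move=> J; rewrite cards_eq0.
by rewrite !big_set0 scale1r.
Qed.

Lemma scale_sign (p : HT n) k : ((-1) ^+ k : int) *: p = (-1) ^+ k * p.
Proof.
elim: k => [|k IH]; first by rewrite !expr0 scale1r mul1r.
by rewrite !exprS -scalerA IH scaleN1r mulN1r mulNr.
Qed.

Definition TT : K := \prod_i tt i.

Lemma TT_neq0 : TT != 0.
Proof. by apply/prodf_neq0 => i _; exact: tt_neq0. Qed.

Lemma tofrac_mono b : @FracField.tofrac (HT n) (\prod_(i in [set~ b]) ('X_i : HT n)) = TT * (tt b)^-1.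
Proof.
rewrite rmorph_prod /TT [in RHS](bigD1 b) //= mulrC mulrA mulVf ?tt_neq0 // mul1r.
by apply: eq_bigl => i; rewrite !inE.
Qed.

Local Notation e := (enum 'I_n.+1).

Lemma e_neq : e != [::].
Proof. by rewrite -size_eq0 size_enum_ord. Qed.

Lemma sumW : \sum_(p <- permutations e) W tt p = (n == 0)%:R.
Proof.
have := @Fpath _ _ tt tt_inj xpredT ord0 (fun => 1) e (enum_uniq _).
rewrite (_ : has xpredT e); last by case: (enum 'I_n.+1) e_neq.
move=> /(_ isT) E; rewrite (eq_bigr (fun p => 1 * W tt p)); last by move=> p _; rewrite mul1r.
rewrite E (_ : has (predC xpredT) e = false) /=; last by apply/hasPn.
rewrite mul1r.
have U := enum_uniq 'I_n.+1; have sz := size_enum_ord n.+1.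
move: U sz; case: (enum 'I_n.+1) => [|z S] //= U [sz].
have -> : (n == 0%N) = (S == [::]) by rewrite -size_eq0 sz.
have U' : uniq (z :: S) by [].
have zS : z \notin S by case/andP: U'.
rewrite -(Lag tt_inj U') big_cons /Dd mul1r; congr (_ + _).
  by rewrite big_cons eqxx /= big_notin.
rewrite big_seq [RHS]big_seq; apply: eq_bigr => y yS; rewrite mul1r big_cons /=.
rewrite (_ : z != y) /=; last by apply: contraNneq zS => ->.
by congr (_ * _); apply: eq_bigl.
Qed.


Lemma core (L : pred 'I_n.+1) : has L e ->
  \sum_(p <- permutations e) (tt (firstL L ord0 p))^-1 * W tt p =
  if has (predC L) e then 0 else (-1) ^+ n * TT^-1.
Proof.
move=> hL; rewrite (@Fpath _ _ tt tt_inj L ord0 (fun b => (tt b)^-1) e (enum_uniq _) hL).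
case: ifP => hC; first by rewrite /= mul0r.
rewrite /= mul1r.
have allL : forall x, L x.
  move=> x; move/negbT/hasPn: hC => /(_ x (mem_enum _ x)) /=; exact: negbNE.
rewrite (eq_big xpredT (fun b => (tt b)^-1 * \prod_(w <- e | w != b) (tt b - tt w)^-1)) //; last first.
  by move=> b _; rewrite /Dd; congr (_ * _); apply: eq_bigl => w; rewrite allL.
have E : \sum_(b <- e) (tt b)^-1 * \prod_(w <- e | w != b) (tt b - tt w)^-1 =
   - \prod_(w <- e) (0 - tt w)^-1.
  move: (enum_uniq 'I_n.+1); case: (enum 'I_n.+1) e_neq => [//|z S] _ U.
  rewrite (@PFstd _ _ tt tt_inj S z 0 U) -?sumrN; last first.
    by move=> w _; rewrite eq_sym tt_neq0.
  by apply: eq_bigr => x _; rewrite sub0r invrN mulNr opprK.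
rewrite E prodfV big_enum /=.
rewrite (eq_bigr (fun i => - tt i)); last by move=> i _; rewrite sub0r.
rewrite prodrN card_ord -/TT invfM -exprVn invrN1 exprS mulN1r mulNr opprK.
by [].
Qed.

Lemma integral_seq (c : {perm 'I_n.+1} -> HT n) : integral_XE c =
  \sum_(s : {perm 'I_n.+1}) @FracField.tofrac (HT n) (homog_part n (c s)) * W tt (pseq s).
Proof. by apply: eq_bigr => s _; rewrite -Weuler. Qed.


Lemma cQ_form (M : matroid n) s : cQ M s =
  \prod_i (1 + ((if i \in lexfirst s M then 0 else -1) : int) *: ('X_i : HT n)).
Proof.
rewrite /cQ big_mkcond; apply: eq_bigr => i _.
by case: (i \in lexfirst s M) => /=; rewrite ?scale0r ?addr0 ?scaleN1r.
Qed.

Lemma cS_form (M : matroid n) s : cSdual M s =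
  \prod_i (1 + ((if i \in lexfirst s M then 1 else 0) : int) *: ('X_i : HT n)).
Proof.
rewrite /cSdual big_mkcond; apply: eq_bigr => i _.
by case: (i \in lexfirst s M) => /=; rewrite ?scale0r ?addr0 ?scale1r.
Qed.

Lemma sumQ1 b : @FracField.tofrac (HT n) (homog_part n
   (\prod_i (1 + ((if i \in [set b] then 0 else -1) : int) *: ('X_i : HT n)))) =
   (-1) ^+ n * TT * (tt b)^-1.
Proof.
rewrite (@hp_one _ b (-1)); first last.
- by rewrite inE eqxx.
- by move=> i nib; rewrite inE (negbTE nib).
by rewrite scale_sign rmorphM rmorphXn rmorphN1 -mulrA -tofrac_mono.
Qed.

Lemma sumS1 c : @FracField.tofrac (HT n) (homog_part n
   (\prod_i (1 + ((if i \in [set~ c] then 1 else 0) : int) *: ('X_i : HT n)))) =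
   TT * (tt c)^-1.
Proof.
rewrite (@hp_one _ c 1); first last.
- by rewrite !inE eqxx.
- by move=> i nic; rewrite !inE nic.
by rewrite expr1n scale1r -tofrac_mono.
Qed.


Lemma hp_deg (d : nat) (P : HT n) : d = 0%N -> homog_part d P = homog_part 0 P.
Proof. by move=> ->. Qed.

Lemma sign_sqr : (-1) ^+ n * (-1) ^+ n = 1 :> K.
Proof. by rewrite -exprD addnn -mul2n exprM sqrrN expr1n expr1n. Qed.

Lemma partQ (M : matroid n) :
  integral_XE (cQ M) = (if is_loop M || (bases M == uniform_bases n 1) then 1 else 0).
Proof.
have /set0Pn[B0 B0M] := bases_neq0 M.
have rk : forall B, B \in bases M -> #|B| = #|B0| by move=> B BM; exact: (bases_card BM B0M).
rewrite integral_seq.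
case: (ltngtP #|B0| 1) => [r0|r2|r1].
- have c0 : forall B, B \in bases M -> B = set0.
    by move=> B BM; apply/eqP; rewrite -cards_eq0 rk //; lia.
  have bM : bases M = [set set0].
    apply/setP => B; rewrite inE; apply/idP/eqP => [/c0 //|->].
    by rewrite -(c0 _ B0M).
  have lf : forall s, lexfirst s M = set0 by move=> s; apply: c0; case: (lexfirstP M s).
  under eq_bigr => s _ do rewrite cQ_form lf.
  rewrite -big_distrr /= (sum_perm_seq _ (W tt)) sumW.
  case n0: (n == 0%N).
    rewrite /is_loop n0 bM eqxx /= mulr1 (hp_deg _ (eqP n0)) hp_zero.
    by rewrite rmorph1.
  rewrite mulr0 /is_loop n0 bM /=; case: eqP => // E.
  have : [set ord0] \in uniform_bases n 1 by rewrite inE cards1.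
  rewrite -E inE => /eqP /setP /(_ ord0); by rewrite !inE eqxx.
- rewrite big1; last first.
    move=> s _; rewrite cQ_form hp_small ?rmorph0 ?mul0r //.
    have [LM _] := lexfirstP M s.
    rewrite (_ : [set i | _] = ~: lexfirst s M); last first.
      by apply/setP => i; rewrite !inE; case: (i \in lexfirst s M).
    have := cardsC (lexfirst s M); rewrite card_ord rk //.
    move: r2; set x := #|B0|; set y := #|~: lexfirst s M|; lia.
  case: ifP => // /orP[/andP[_ /eqP bM]|/eqP bM].
    by move: B0M r2; rewrite bM inE => /eqP ->; rewrite cards0.
  by move: B0M r2; rewrite bM inE => /eqP ->.
have rk1 : forall B, B \in bases M -> #|B| = 1%N by move=> B BM; rewrite rk.
set L := [pred l | [set l] \in bases M].
under eq_bigr => s _ do rewrite cQ_form (lexfirst_rank1 s rk1) sumQ1 -!mulrA.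
rewrite -big_distrr -big_distrr /=.
rewrite (sum_perm_seq _ (fun p => (tt (firstL L ord0 p))^-1 * W tt p)).
have /cards1P[l0 El0] : #|B0| == 1%N by rewrite r1.
have hL : has L e by apply/hasP; exists l0; rewrite ?mem_enum // inE /= -El0.
rewrite core //.
have nloop : is_loop M = false.
  apply/negbTE/negP => /andP[_ /eqP bM].
  by move: B0M r1; rewrite bM inE => /eqP ->; rewrite cards0.
rewrite nloop /=.
case: ifP => hC.
  rewrite !mulr0; case: eqP => // E.
  have /hasP[l _ /= nLl] := hC.
  have : [set l] \in uniform_bases n 1 by rewrite inE cards1.
  by rewrite -E => Ll; rewrite Ll in nLl.
have allL : forall x, L x.
  move=> x; move/negbT/hasPn: hC => /(_ x (mem_enum _ x)) /=; exact: negbNE.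
rewrite (_ : bases M == uniform_bases n 1); last first.
  apply/eqP/setP => B; rewrite inE; apply/idP/idP => [BM|/cards1P[l ->]].
    by rewrite rk1.
  exact: allL.
have -> : forall x y : K, x * (TT * (x * y)) = (x * x) * (TT * y) by move=> x y; ring.
by rewrite sign_sqr mul1r divff // TT_neq0.
Qed.


Lemma partS (M : matroid n) :
  integral_XE (cSdual M) = (if is_coloop M || (bases M == uniform_bases n n) then 1 else 0).
Proof.
have /set0Pn[B0 B0M] := bases_neq0 M.
have rk : forall B, B \in bases M -> #|B| = #|B0| by move=> B BM; exact: (bases_card BM B0M).
rewrite integral_seq.
case: (ltngtP #|B0| n) => [rlt|rgt|req].
- rewrite big1; last first.
    move=> s _; rewrite cS_form hp_small ?rmorph0 ?mul0r //.
    have [LM _] := lexfirstP M s.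
    rewrite (_ : [set i | _] = lexfirst s M); last first.
      by apply/setP => i; rewrite !inE; case: (i \in lexfirst s M).
    by rewrite rk.
  case: ifP => // /orP[/andP[_ /eqP bM]|/eqP bM].
    by move: B0M rlt; rewrite bM inE => /eqP ->; rewrite cardsT card_ord ltnNge leqnSn.
  by move: B0M rlt; rewrite bM inE => /eqP ->; rewrite ltnn.
- have cT : forall B, B \in bases M -> B = setT.
    move=> B BM; apply/eqP; rewrite eqEcard subsetT cardsT card_ord rk //.
  have bM : bases M = [set setT].
    apply/setP => B; rewrite inE; apply/idP/eqP => [/cT //|->].
    by rewrite -(cT _ B0M).
  have lf : forall s, lexfirst s M = setT by move=> s; apply: cT; case: (lexfirstP M s).
  under eq_bigr => s _ do rewrite cS_form lf.
  rewrite -big_distrr /= (sum_perm_seq _ (W tt)) sumW.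
  case n0: (n == 0%N).
    rewrite /is_coloop n0 bM eqxx /= mulr1 (hp_deg _ (eqP n0)) hp_zero.
    by rewrite rmorph1.
  rewrite mulr0 /is_coloop n0 bM /=; case: eqP => // E.
  have : [set~ ord0] \in uniform_bases n n by rewrite inE cardsC1 card_ord.
  rewrite -E inE => /eqP /setP /(_ ord0); by rewrite !inE eqxx.
have rkn : forall B, B \in bases M -> #|B| = n by move=> B BM; rewrite rk.
have compl : forall B : {set 'I_n.+1}, #|B| = n -> exists l, B = [set~ l].
  move=> B cB; have /cards1P[l El] : #|~: B| == 1%N.
    by apply/eqP; have := cardsC B; rewrite card_ord cB; lia.
  by exists l; rewrite -El setCK.
set C := [pred c | [set~ c] \in bases M].
under eq_bigr => s _ do rewrite cS_form (lexfirst_rankn s rkn) sumS1 -!mulrA.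
rewrite -big_distrr /=.
rewrite (sum_perm_seq _ (fun p => (tt (firstL C ord0 (rev p)))^-1 * W tt p)).
rewrite -(sum_perm_rev _ _ (fun p => (tt (firstL C ord0 (rev p)))^-1 * W tt p)).
under eq_bigr => p _ do rewrite revK W_rev.
rewrite big_seq.
rewrite (eq_bigr (fun p => (-1) ^+ n * ((tt (firstL C ord0 p))^-1 * W tt p))); last first.
  move=> p Pp; rewrite (_ : size p = n.+1) /=; first by rewrite mulrCA.
  by move: Pp; rewrite mem_permutations => /perm_size ->; rewrite size_enum_ord.
rewrite -big_seq /= -big_distrr /=.
have [c0 Ec0] := compl _ (rkn _ B0M).
have hC0 : has C e by apply/hasP; exists c0; rewrite ?mem_enum // inE /= -Ec0.
rewrite core //.
have ncol : is_coloop M = false.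
  apply/negbTE/negP => /andP[_ /eqP bM].
  by move: B0M req; rewrite bM inE => /eqP ->; rewrite cardsT card_ord ; lia.
rewrite ncol /=.
case: ifP => hC.
  rewrite !mulr0; case: eqP => // E.
  have /hasP[l _ /= nCl] := hC.
  have : [set~ l] \in uniform_bases n n by rewrite inE cardsC1 card_ord.
  by rewrite -E => Cl; rewrite Cl in nCl.
have allC : forall x, C x.
  move=> x; move/negbT/hasPn: hC => /(_ x (mem_enum _ x)) /=; exact: negbNE.
rewrite (_ : bases M == uniform_bases n n); last first.
  apply/eqP/setP => B; rewrite inE; apply/idP/idP => [BM|/eqP /compl [l ->]].
    by rewrite rkn.
  exact: allC.
have -> : forall x y : K, TT * (x * (x * y)) = (x * x) * (TT * y) by move=> x y; ring.
by rewrite sign_sqr mul1r divff // TT_neq0.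
Qed.

End Final.

Unset Implicit Arguments.

Theorem lemma7p3 (n : nat) (M : matroid n) :
  integral_XE (cQ M)
    = (if is_loop M || (bases M == uniform_bases n 1) then 1 else 0)
  /\
  integral_XE (cSdual M)
    = (if is_coloop M || (bases M == uniform_bases n n) then 1 else 0).
Proof.
split; [exact: partQ | exact: partS].
Qed.
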